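(* Let $G$ be a graph of order $n$. Then $\alpha(G) \le m_G[0,\,n-\alpha(G)]$.
   Context: All graphs are finite and simple. The Laplacian matrix of $G$ is $L(G)=D(G)-A(G)$, where $D(G)$ is the diagonal matrix of vertex degrees and $A(G)$ the adjacency matrix; its eigenvalues (with multiplicity) are the Laplacian eigenvalues of $G$. For an interval $I\subseteq\mathbb{R}$, $m_G I$ denotes the number of Laplacian eigenvalues of $G$, counted with multiplicity, lying in $I$. $\alpha(G)$ denotes the independence number of $G$. *)

(* Defs.v *)
From HB Require Import structures.
From mathcomp Require Import all_boot all_order all_algebra.
From mathcomp Require Import polyrcf.
Set Implicit Arguments. Unset Strict Implicit. Unset Printing Implicit Defensive.
Import Order.TTheory GRing.Theory Num.Theory.
Local Open Scope ring_scope.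

Definition simple_graph (T : finType) (e : rel T) : Prop :=
  symmetric e /\ irreflexive e.

Definition deg (T : finType) (e : rel T) (x : T) : nat := #|[set y | e x y]|.

Definition laplacian (R : nzRingType) (T : finType) (e : rel T) : 'M[R]_#|T| :=
  \matrix_(i, j) (if i == j then (deg e (enum_val i))%:R
                  else - (e (enum_val i) (enum_val j))%:R).

Definition independent (T : finType) (e : rel T) (S : {set T}) : bool :=
  [forall x in S, forall y in S, ~~ e x y].

Definition alpha (T : finType) (e : rel T) : nat :=
  \max_(S : {set T} | independent e S) #|S|.

(* m_G I : number of Laplacian eigenvalues (roots of the characteristic
   polynomial, counted with multiplicity) lying in the interval I. *)
Definition mG (R : rcfType) (T : finType) (e : rel T) (I : interval R) : nat :=
  let p := char_poly (laplacian R e) in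
  (\sum_(x <- rootsR p | x \in I) mup x p)%N.
Arguments mG R {T} e I.

(* Main.v *)
Require Import Defs.
From HB Require Import structures.
From mathcomp Require Import all_boot all_order all_algebra.
From mathcomp Require Import polyrcf.
From mathcomp Require Import complex spectral sesquilinear ring lra.
Set Implicit Arguments. Unset Strict Implicit. Unset Printing Implicit Defensive.
Import Order.TTheory GRing.Theory Num.Theory.
Local Open Scope ring_scope.


Lemma mup_prodXsubC (F : fieldType) (s : seq F) (x : F) :
  mup x (\prod_(y <- s) ('X - y%:P)) = count_mem x s.
Proof.
elim: s => [|y s IH]; first by rewrite big_nil mupNroot ?root1.
rewrite big_cons mupM ?polyXsubC_eq0 ?monic_neq0 ?monic_prod_XsubC //.
by rewrite IH -['X - y%:P]expr1 mup_XsubCX /= eq_sym; case: (x == y).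
Qed.

Lemma sum_count_uniq (T : eqType) (r s : seq T) (I : pred T) :
  uniq r -> {subset s <= r} ->
  (\sum_(x <- r | I x) count_mem x s)%N = count I s.
Proof.
move=> ur; elim: s => [|y s IH] sr /=; first by rewrite big1.
rewrite big_split /= IH; last by move=> z zs; apply: sr; rewrite inE zs orbT.
congr (_ + _)%N; rewrite big_mkcond (bigD1_seq y) ?sr ?mem_head //= eqxx.
rewrite big1 ?addn0; first by case: (I y).
by move=> z /negbTE; rewrite eq_sym => ->; case: (I z).
Qed.

Lemma sum_mup_rootsR (R : rcfType) (s : seq R) (I : pred R) :
  let p := \prod_(y <- s) ('X - y%:P) in
  (\sum_(x <- rootsR p | I x) mup x p)%N = count I s.
Proof.
move=> p; have p0 : p != 0 by rewrite monic_neq0 ?monic_prod_XsubC.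
have inR : {subset s <= rootsR p}.
  move=> y ys; have := roots_onP (roots_on_rootsR p0) (x := y).
  by rewrite /= => <- //; rewrite /p root_prod_XsubC.
have uR : uniq (rootsR p) by apply: lt_sorted_uniq; apply: sorted_roots.
under eq_bigr do rewrite mup_prodXsubC.
exact: sum_count_uniq.
Qed.


Lemma char_poly_conj (F : fieldType) n (P B : 'M[F]_n) :
  P \in unitmx -> char_poly (invmx P *m B *m P) = char_poly B.
Proof.
move=> Pu; rewrite /char_poly /char_poly_mx.
have -> : 'X%:M - map_mx polyC (invmx P *m B *m P) =
  map_mx polyC (invmx P) *m ('X%:M - map_mx polyC B) *m map_mx polyC P.
  rewrite mulmxBr mulmxBl !map_mxM /= mul_mx_scalar; congr (_ - _).
  rewrite -scalemxAl.
  have -> : map_mx polyC (invmx P) *m map_mx polyC P = 1%:M.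
    by rewrite -map_mxM mulVmx // map_mx1.
  by rewrite scalemx1.
rewrite !det_mulmx !det_map_mx mulrC mulrA -rmorphM /= -det_mulmx mulmxV //.
by rewrite det1 mul1r.
Qed.

Lemma char_poly_diag (R : comNzRingType) n (d : 'rV[R]_n) :
  char_poly (diag_mx d) = \prod_(i < n) ('X - (d 0 i)%:P).
Proof.
rewrite char_poly_trig ?diag_mx_is_trig //.
by apply: eq_bigr => i _; rewrite mxE eqxx mulr1n.
Qed.


Lemma real_spectral (R : rcfType) n (M : 'M[R]_n) : M^T = M ->
  exists r : 'I_n -> R, exists P : 'M[R[i]]_n, [/\ P \is unitarymx,
    map_mx (real_complex R) M = invmx P *m diag_mx (\row_i (real_complex R (r i))) *m P &
    char_poly M = \prod_(i < n) ('X - (r i)%:P)].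
Proof.
move=> Msym; set A := map_mx (real_complex R) M.
have Hsym : A \is symmetricmx.
  apply/is_hermitianmxP; rewrite expr0 scale1r map_mx_id //.
  by rewrite /A map_trmx Msym.
have Hreal : A \is a mxOver Num.real.
  by apply/mxOverP => i j; rewrite mxE complex_real.
have H := realsym_hermsym Hsym Hreal.
have /orthomx_spectralP Aeq := hermitian_normalmx H.
have /mxOverP dreal := hermitian_spectral_diag_real H.
set P := spectralmx A in Aeq; set d := spectral_diag A in Aeq dreal.
have dE : d = \row_i (real_complex R (complex.Re (d 0 i))).
  by apply/rowP => i; rewrite mxE RRe_real // dreal.
exists (fun i => complex.Re (d 0 i)), P; split.
- exact: spectral_unitarymx.
- by rewrite -dE.
apply: (map_poly_inj (real_complex R)).
rewrite map_char_poly -/A Aeq char_poly_conj ?spectral_unit //.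
rewrite char_poly_diag rmorph_prod /=; apply: eq_bigr => i _.
by rewrite map_polyXsubC /= RRe_real // dreal.
Qed.


Definition selmx (F : fieldType) n (X : {set 'I_n}) : 'M[F]_(#|X|, n) :=
  \matrix_(k, j) ((j == enum_val k)%:R).

Lemma selmx_mulT (F : fieldType) n (X : {set 'I_n}) :
  selmx F X *m (selmx F X)^T = 1%:M.
Proof.
apply/matrixP => k l; rewrite !mxE (bigD1 (enum_val k)) //= big1.
  rewrite !mxE eqxx mul1r addr0 (inj_eq enum_val_inj) eq_sym.
  by case: (l == k).
by move=> j /negbTE jk; rewrite !mxE jk mul0r.
Qed.

Lemma rank_selmx (F : fieldType) n (X : {set 'I_n}) :
  \rank (selmx F X) = #|X|.
Proof.
apply/eqP; rewrite eqn_leq rank_leq_row /=.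
by rewrite -{1}(mxrank1 F #|X|) -(selmx_mulT F X) mxrankM_maxl.
Qed.

Lemma mul_selmxT (F : fieldType) n (X : {set 'I_n}) (v : 'rV[F]_n) k :
  (v *m (selmx F X)^T) 0 k = v 0 (enum_val k).
Proof.
rewrite mxE (bigD1 (enum_val k)) //= big1.
  by rewrite !mxE eqxx mulr1 addr0.
by move=> j /negbTE jk; rewrite !mxE jk mulr0.
Qed.

Lemma mul_selmx_out (F : fieldType) n (X : {set 'I_n}) (w : 'rV[F]_#|X|) j :
  j \notin X -> (w *m selmx F X) 0 j = 0.
Proof.
move=> jX; rewrite mxE big1 // => k _; rewrite mxE.
case: eqP => [jk|]; last by rewrite mulr0.
by move: jX; rewrite jk enum_valP.
Qed.

Lemma exists_supp (F : fieldType) n (X Y : {set 'I_n}) (Q : 'M[F]_n) :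
  (#|Y| < #|X|)%N -> exists x : 'rV[F]_n, [/\ x != 0,
     forall j, j \notin X -> x 0 j = 0 &
     forall j, j \in Y -> (x *m Q) 0 j = 0].
Proof.
move=> YX; set A1 := selmx F X; set B1 := Q *m (selmx F Y)^T.
have := mxrank_mul_ker A1 B1; rewrite rank_selmx => Hr.
have Hle : (\rank (A1 *m B1) <= #|Y|)%N by apply: rank_leq_col.
set cap := (A1 :&: kermx B1)%MS in Hr.
have cap0 : cap != 0.
  rewrite -mxrank_eq0; apply/eqP => c0; move: Hr; rewrite c0 addn0 => Hr.
  by move: YX; rewrite -Hr ltnNge Hle.
exists (nz_row cap); split.
- by rewrite nz_row_eq0.
- move=> j jX.
  have /submxP [w ->] : (nz_row cap <= A1)%MS.
    exact: submx_trans (nz_row_sub cap) (capmxSl _ _).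
  exact: mul_selmx_out.
- move=> j jY.
  have : (nz_row cap <= kermx B1)%MS.
    exact: submx_trans (nz_row_sub cap) (capmxSr _ _).
  rewrite sub_kermx /B1 mulmxA => /eqP /rowP /(_ (enum_rank_in jY j)).
  by rewrite mul_selmxT enum_rankK_in // [in X in _ = X -> _]mxE.
Qed.

Local Open Scope sesquilinear_scope.



Lemma qformE (C : numClosedFieldType) n (A : 'M[C]_n) (x : 'rV[C]_n) :
  (x *m A *m x ^t*) 0 0 = \sum_i \sum_j x 0 i * A i j * (x 0 j)^*.
Proof.
rewrite mxE exchange_big /=; apply: eq_bigr => j _.
rewrite [(x *m A) 0 j]mxE big_distrl /=; apply: eq_bigr => i _.
by rewrite !mxE.
Qed.

Lemma normE (C : numClosedFieldType) n (x : 'rV[C]_n) :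
  (x *m x ^t*) 0 0 = \sum_i x 0 i * (x 0 i)^*.
Proof. by rewrite mxE; apply: eq_bigr => i _; rewrite !mxE. Qed.

Lemma qform_S (C : numClosedFieldType) n (A : 'M[C]_n) (D : pred 'I_n) (c : C)
  (x : 'rV[C]_n) :
  (forall i j, D i -> D j -> i != j -> A i j = 0) ->
  (forall i, D i -> A i i <= c) ->
  (forall j, ~~ D j -> x 0 j = 0) ->
  (x *m A *m x ^t*) 0 0 <= c * (x *m x ^t*) 0 0.
Proof.
move=> Aoff Adiag xD; rewrite qformE normE mulr_sumr; apply: ler_sum => i _.
rewrite (bigD1 i) //= big1 ?addr0.
  have [Di|nDi] := boolP (D i); last by rewrite xD // !mul0r mulr0.
  rewrite mulrAC [c * _]mulrA [c * _]mulrC mulrAC [_ * A i i]mulrC.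
  have := ler_wpM2r (mul_conjC_ge0 (x 0 i)) (Adiag i Di).
  by rewrite !mulrA [c * x 0 i]mulrC.
move=> j ji; have [Di|nDi] := boolP (D i); last by rewrite xD // !mul0r.
have [Dj|nDj] := boolP (D j); last by rewrite (xD j) // rmorph0 mulr0.
by rewrite Aoff // 1?eq_sym // mulr0 mul0r.
Qed.

Lemma qform_K (C : numClosedFieldType) n (d : 'rV[C]_n) (c : C) (y : 'rV[C]_n) :
  (forall j, y 0 j != 0 -> c < d 0 j) -> y != 0 ->
  c * (y *m y ^t*) 0 0 < (y *m diag_mx d *m y ^t*) 0 0.
Proof.
move=> yd y0; rewrite -subr_gt0 qformE normE mulr_sumr -sumrB.
have [k yk] : exists k, y 0 k != 0.
  apply/existsP; apply: contraNT y0; rewrite negb_exists => /forallP H.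
  by apply/eqP/rowP => k; rewrite mxE; apply/eqP; move: (H k); rewrite negbK.
have term : forall i, \sum_j y 0 i * diag_mx d i j * (y 0 j)^* - c * (y 0 i * (y 0 i)^*)
   = (d 0 i - c) * (y 0 i * (y 0 i)^*).
  move=> i; rewrite (bigD1 i) //= big1 ?addr0.
    by rewrite mxE eqxx mulr1n mulrBl [d 0 i * _]mulrA [d 0 i * y 0 i]mulrC.
  by move=> j ji; rewrite mxE eq_sym (negbTE ji) mulr0n mulr0 mul0r.
under eq_bigr do rewrite term.
rewrite (bigD1 k) //= ltr_wpDr ?sumr_ge0 //.
  move=> i _; have [->|yi] := eqVneq (y 0 i) 0; first by rewrite mul0r mulr0.
  by rewrite mulr_ge0 ?mul_conjC_ge0 // subr_ge0 ltW // yd.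
by rewrite mulr_gt0 ?mul_conjC_gt0 // subr_gt0 yd.
Qed.


Lemma deg_sum (R : nzRingType) (T : finType) (e : rel T) (y : T) :
  symmetric e ->
  (deg e y)%:R = \sum_(j < #|T|) (e (enum_val j) y)%:R :> R.
Proof.
move=> esym; rewrite /deg -sum1_card natr_sum big_mkcond /=.
rewrite (big_enum_val (A := T)); apply: eq_bigr => j _.
by rewrite inE esym; case: (e _ _).
Qed.

Lemma lapE (R : nzRingType) (T : finType) (e : rel T) i j :
  laplacian R e i j = if i == j then (deg e (enum_val i))%:R
                      else - (e (enum_val i) (enum_val j))%:R.
Proof. by rewrite mxE. Qed.

Lemma lap_sym (R : nzRingType) (T : finType) (e : rel T) :
  symmetric e -> (laplacian R e)^T = laplacian R e.
Proof.
move=> esym; apply/matrixP => i j; rewrite mxE !lapE eq_sym esym.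
by case: eqP => // ->.
Qed.

Lemma lap_eig_ge0 (R : rcfType) (T : finType) (e : rel T) (x : R) :
  simple_graph e -> root (char_poly (laplacian R e)) x -> 0 <= x.
Proof.
move=> [esym eirr]; rewrite -eigenvalue_root_char => /eigenvalueP [v vL v0].
have [k vk] : exists k, v 0 k != 0.
  apply/existsP; apply: contraNT v0; rewrite negb_exists => /forallP H.
  by apply/eqP/rowP => k; rewrite mxE; apply/eqP; move: (H k); rewrite negbK.
case: (@arg_maxP _ R _ k xpredT (fun i => `|v 0 i|) isT) => i _ imax.
have vi0 : 0 < `|v 0 i| by apply: lt_le_trans (imax k isT); rewrite normr_gt0.
set s := \sum_(j | j != i) v 0 j * (e (enum_val j) (enum_val i))%:R.
set dg := (deg e (enum_val i))%:R : R.
have E : x * v 0 i = v 0 i * dg - s.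
  move/rowP: vL => /(_ i); rewrite !mxE => <-.
  rewrite (bigD1 i) //= lapE eqxx /s -sumrN; congr (_ + _).
  by apply: eq_bigr => j ji; rewrite lapE (negbTE ji) mulrN.
have sE : s = v 0 i * (dg - x) by rewrite mulrBr [v 0 i * x]mulrC E; ring.
have dgE : dg = \sum_(j | j != i) (e (enum_val j) (enum_val i))%:R.
  rewrite /dg deg_sum // (bigD1 i) //= eirr add0r //.
have sle : `|s| <= `|v 0 i| * dg.
  apply: le_trans (ler_norm_sum _ _ _) _.
  rewrite dgE mulr_sumr; apply: ler_sum => j _.
  by rewrite normrM normr_nat; apply: ler_wpM2r; [exact: ler0n | exact: imax].
have dg0 : 0 <= dg by rewrite /dg ler0n.
move: sle; rewrite sE normrM ler_pM2l // => H.
have := le_trans (ler_norm _) H; lra.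
Qed.

Lemma count_enum_card (T : finType) (P : pred T) : count P (enum T) = #|[set i | P i]|.
Proof.
rewrite cardE -size_filter; congr size. rewrite /enum_mem -enumT.
rewrite (@eq_filter _ (mem T) predT) // filter_predT.
by apply/eq_filter => x; rewrite /= inE.
Qed.

Theorem mainTheorem1 (R : rcfType) (T : finType) (e : rel T) :
  simple_graph e ->
  (alpha e <= mG R e `[0%R : R, ((#|T| - alpha e)%N)%:R%R])%N.
Proof.
move=> sg; have [esym eirr] := sg.
have [S Sind SE] : exists2 S : {set T}, independent e S & alpha e = #|S|.
  have := @eq_bigmax_cond _ [pred S : {set T} | independent e S] (fun S => #|S|).
  case => [|S Sind SE]; last by exists S; rewrite // /alpha SE.
  apply/card_gt0P; exists set0; rewrite inE /independent.
  by apply/forall_inP => x; rewrite inE.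
set n := #|T|; set L := laplacian R e.
set c := ((n - alpha e)%N)%:R : R.
have [r [P [Pu Leq Lcp]]] := real_spectral (lap_sym R esym).
have pE : \prod_(i < n) ('X - (r i)%:P) =
            \prod_(y <- [seq r i | i <- enum 'I_n]) ('X - y%:P).
  by rewrite big_map big_enum.
have r0 : forall i, 0 <= r i.
  move=> i; apply: (lap_eig_ge0 sg); rewrite -/L Lcp pE root_prod_XsubC.
  by rewrite map_f ?mem_enum.
have -> : mG R e `[0, c] = #|[set i | r i <= c]|.
  rewrite /mG -/L Lcp pE.
  rewrite (sum_mup_rootsR _ (fun x => x \in `[0, c])) count_map count_enum_card.
  by apply: eq_card => i; rewrite !inE subitvE !bnd_simp r0.
rewrite leqNgt; apply/negP => Hlt.
pose S' : {set 'I_#|T|} := [set enum_rank z | z in S].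
have S'E : #|S'| = #|S| by rewrite card_imset //; exact: enum_rank_inj.
have inS' : forall i, i \in S' -> enum_val i \in S.
  by move=> i /imsetP [z zS ->]; rewrite enum_rankK.
have indep : forall u v, u \in S -> v \in S -> e u v = false.
  move=> u v uS vS; apply/negbTE.
  by move/forall_inP: Sind => /(_ u uS) /forall_inP /(_ v vS).
have degS : forall v, v \in S -> (deg e v <= n - alpha e)%N.
  move=> v vS; rewrite /deg SE.
  have -> : (n - #|S| = #|~: S|)%N by rewrite /n -(cardsC S) addKn.
  apply: subset_leq_card; apply/subsetP => z; rewrite !inE.
  by apply: contraTN => zS; rewrite indep.
have HX : (#|[set i | (r i <= c)%R]| < #|S'|)%N by rewrite S'E -SE.
have [x [x0 xS xK]] := @exists_supp _ _ S' [set i | r i <= c] (P ^t*) HX.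
set y := x *m P ^t*.
have PtP : P ^t* *m P = 1%:M.
  by rewrite -invmx_unitary // mulVmx ?unitarymx_unit.
have y0 : y != 0.
  apply: contraNneq x0 => y0.
  have : y *m P = x by rewrite /y -mulmxA PtP mulmx1.
  by rewrite y0 mul0mx => <-.
have yt : y ^t* = P *m x ^t* by rewrite /y trmx_mul map_mxM trmxCK.
set d := \row_i (real_complex R (r i)).
set A := laplacian R e ^ real_complex R.
have qA : (x *m A *m x ^t*) 0 0 = (y *m diag_mx d *m y ^t*) 0 0.
  by rewrite /A Leq invmx_unitary // yt /y !mulmxA.
have nA : (x *m x ^t*) 0 0 = (y *m y ^t*) 0 0.
  by rewrite yt /y !mulmxA -(mulmxA x) PtP mulmx1.
have H1 := @qform_K _ _ d (real_complex R c) y.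
have H2 := @qform_S _ _ A (mem S') (real_complex R c) x.
have Hy : forall j, y 0 j != 0 -> real_complex R c < d 0 j.
  move=> j yj; rewrite mxE ltcR ltNge; apply: contra yj => rc.
  by apply/eqP; apply: xK; rewrite inE.
move: (H1 Hy y0); rewrite -qA -nA => {}H1.
have H3 : (x *m A *m x ^t*) 0 0 <= real_complex R c * (x *m x ^t*) 0 0.
  apply: H2.
  - move=> i j iS jS ij; rewrite /A mxE lapE (negbTE ij) indep ?inS' //.
    by rewrite mulr0n oppr0 rmorph0.
  - move=> i iS; rewrite /A mxE lapE eqxx lecR /c ler_nat.
    exact: degS (inS' _ iS).
  - by move=> j jS; apply: xS.
by move: (lt_le_trans H1 H3); rewrite ltxx.
Qed.
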